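(* Let $n\in\mathbb N$ and $i,j\in\{1,2\}$. (i) If $n$ is odd and $n\ge 17$, then $r(T_n^i,T_n^j)=2n-7$. (ii) If $n$ is even and $n\ge 12$, then $r(T_n^i,T_n^j)=2n-6$.
   Context: All graphs are finite and simple; a graph ''contains'' $H$ if it has a subgraph isomorphic to $H$. For graphs $G_1,G_2$, the Ramsey number $r(G_1,G_2)$ is the smallest positive integer $N$ such that for every graph $G$ on $N$ vertices, either $G$ contains a copy of $G_1$ or the complement $\overline G$ contains a copy of $G_2$. For $n\ge 5$, $T_n^1$ is the tree with vertex set $\{v_0,\ldots,v_{n-1}\}$ and edges $v_0v_1,\ldots,v_0v_{n-3},v_{n-4}v_{n-2},v_{n-3}v_{n-1}$, and $T_n^2$ is the tree on the same vertex set with edges $v_0v_1,\ldots,v_0v_{n-3},v_{n-3}v_{n-2},v_{n-3}v_{n-1}$. *)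

(* Defs.v *)
From mathcomp Require Import all_boot.
Set Implicit Arguments. Unset Strict Implicit. Unset Printing Implicit Defensive.

Definition simple_graph (N : nat) (G : rel 'I_N) : Prop :=
  symmetric G /\ irreflexive G.

Definition compl (N : nat) (G : rel 'I_N) : rel 'I_N :=
  fun x y => (x != y) && ~~ G x y.

Definition contains (N : nat) (G : rel 'I_N) (k : nat) (H : rel 'I_k) : Prop :=
  exists f : 'I_k -> 'I_N, injective f /\ forall u v, H u v -> G (f u) (f v).

Definition ramsey_prop (k1 : nat) (G1 : rel 'I_k1) (k2 : nat) (G2 : rel 'I_k2)
  (N : nat) : Prop :=
  forall G : rel 'I_N, simple_graph G -> contains G G1 \/ contains (compl G) G2.

Definition is_ramsey_number (k1 : nat) (G1 : rel 'I_k1) (k2 : nat)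
  (G2 : rel 'I_k2) (r : nat) : Prop :=
  0 < r /\ ramsey_prop G1 G2 r /\
  (forall N, 0 < N -> N < r -> ~ ramsey_prop G1 G2 N).

Definition symc (n : nat) (b : nat -> nat -> bool) : rel 'I_n :=
  fun u v => b (val u) (val v) || b (val v) (val u).

Definition T1 (n : nat) : rel 'I_n :=
  @symc n (fun a b => ((a == 0) && (1 <= b <= n - 3))
                     || ((a == n - 4) && (b == n - 2))
                     || ((a == n - 3) && (b == n - 1))).

Definition T2 (n : nat) : rel 'I_n :=
  @symc n (fun a b => ((a == 0) && (1 <= b <= n - 3))
                     || ((a == n - 3) && (b == n - 2))
                     || ((a == n - 3) && (b == n - 1))).

Definition T (i n : nat) : rel 'I_n := if i == 1 then @T1 n else @T2 n.

(* Main.v *)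
Require Import Defs.
From mathcomp Require Import all_boot.
From mathcomp Require Import zify.
From Stdlib Require Import Classical.
Set Implicit Arguments. Unset Strict Implicit. Unset Printing Implicit Defensive.


Lemma contains_of_seq N n (H : rel 'I_N) (b : nat -> nat -> bool) (sq : seq 'I_N) (x0 : 'I_N) :
  symmetric H -> uniq sq -> size sq = n ->
  (forall u v, u < n -> v < n -> b u v -> H (nth x0 sq u) (nth x0 sq v)) ->
  contains H (@symc n b).
Proof.
move=> Hs U S E; exists (fun u : 'I_n => nth x0 sq u); split.
- move=> u v /eqP; rewrite nth_uniq ?S // => /eqP; apply: val_inj.
- move=> u v; rewrite /symc => /orP [h|h]; first exact: E.
  by rewrite Hs; apply: E.
Qed.

Lemma card2D N (S : {set 'I_N}) s1 s2 : s1 \in S -> s2 \in S -> s1 != s2 ->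
  #|S :\ s1 :\ s2| = #|S| - 2.
Proof.
move=> h1 h2 h12; rewrite (cardsD1 s1 S) h1 (cardsD1 s2 (S :\ s1)) !inE h2 eq_sym h12 /=.
lia.
Qed.

Lemma emb1 N n (H : rel 'I_N) (S : {set 'I_N}) y s1 s2 c1 c2 :
  symmetric H -> 5 <= n -> y \notin S -> s1 \in S -> s2 \in S -> s1 != s2 ->
  c1 \notin S -> c2 \notin S -> c1 != y -> c2 != y -> c1 != c2 ->
  (forall s, s \in S -> H y s) -> H s1 c1 -> H s2 c2 -> n - 3 <= #|S| ->
  contains H (@T1 n).
Proof.
move=> Hs n5 yS s1S s2S s12 c1S c2S c1y c2y c12 HyS H1 H2 cS.
set L := take (n - 5) (enum (S :\ s1 :\ s2)).
have cL : #|S :\ s1 :\ s2| = #|S| - 2 by apply: card2D.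
have sL : size L = n - 5 by rewrite size_takel // -cardE cL; clear -cS n5; lia.
have mL x : x \in L -> [&& x \in S, x != s1 & x != s2].
  by move/mem_take; rewrite mem_enum !inE => /and3P[-> -> ->]; rewrite andbT.
have uL : uniq L by rewrite take_uniq // enum_uniq.
clearbody L.
pose sq := y :: ((L ++ [:: s1; s2]) ++ [:: c1; c2]).
have hS x : x \in L ++ [:: s1; s2] -> x \in S.
  by rewrite mem_cat !inE => /orP[/mL/and3P[]//|/orP[]/eqP->].
apply: (@contains_of_seq N n H _ sq y Hs).
- have nL x : x \notin S -> x \notin L by apply: contra => /mL/and3P[].
  have ne a b : a \in S -> b \notin S -> (a == b) = false /\ (b == a) = false.
    by move=> aS bS; split; apply/eqP=> e; [rewrite -e aS in bS | rewrite e aS in bS].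
  have s1L : s1 \notin L by apply/negP=> /mL/and3P[_]; rewrite eqxx.
  have s2L : s2 \notin L by apply/negP=> /mL/and3P[_ _]; rewrite eqxx.
  rewrite /sq cons_uniq cat_uniq cat_uniq uL /= !inE !mem_cat !inE.
  rewrite (negbTE (nL _ yS)) (negbTE (nL _ c1S)) (negbTE (nL _ c2S)) (negbTE s1L) (negbTE s2L).
  rewrite (ne _ _ s1S yS).2 (ne _ _ s2S yS).2 (ne _ _ s1S c1S).2 (ne _ _ s2S c1S).2.
  rewrite (ne _ _ s1S c2S).2 (ne _ _ s2S c2S).2 s12 c12 /=.
  by rewrite (eq_sym y c1) (negbTE c1y) (eq_sym y c2) (negbTE c2y).
- by rewrite /sq /= size_cat size_cat sL /=; clear -n5; lia.
move=> u v un vn /orP[/orP[/and3P[/eqP -> v0 vn3]|/andP[/eqP -> /eqP ->]]|/andP[/eqP -> /eqP ->]].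
- rewrite /sq /=; apply: HyS; apply: hS.
  have -> : v = v.-1.+1 by clear -v0; lia.
  rewrite /= nth_cat size_cat sL /= ifT; last by clear -v0 vn3 n5; lia.
  apply: mem_nth; rewrite size_cat sL /=; clear -v0 vn3 n5; lia.
- have e1 : n - 4 = (size L).+1 by rewrite sL; clear -n5; lia.
  have e2 : n - 2 = (size L).+3 by rewrite sL; clear -n5; lia.
  rewrite e1 e2 /sq /= !nth_cat size_cat /=.
  have -> : size L < size L + 2 = true by clear; lia.
  have -> : (size L).+2 < size L + 2 = false by clear; lia.
  rewrite ltnn subnn.
  by have -> : (size L).+2 - (size L + 2) = 0 by clear; lia.
- have e1 : n - 3 = (size L).+2 by rewrite sL; clear -n5; lia.
  have e2 : n - 1 = (size L).+4 by rewrite sL; clear -n5; lia.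
  rewrite e1 e2 /sq /= !nth_cat size_cat /=.
  have -> : (size L).+1 < size L = false by clear; lia.
  have -> : (size L).+1 < size L + 2 = true by clear; lia.
  have -> : (size L).+3 < size L + 2 = false by clear; lia.
  have -> : (size L).+1 - size L = 1 by clear; lia.
  by have -> : (size L).+3 - (size L + 2) = 1 by clear; lia.
Qed.

Lemma emb2 N n (H : rel 'I_N) (S : {set 'I_N}) y s c1 c2 :
  symmetric H -> 5 <= n -> y \notin S -> s \in S ->
  c1 \notin S -> c2 \notin S -> c1 != y -> c2 != y -> c1 != c2 ->
  (forall s, s \in S -> H y s) -> H s c1 -> H s c2 -> n - 3 <= #|S| ->
  contains H (@T2 n).
Proof.
move=> Hs n5 yS sS c1S c2S c1y c2y c12 HyS H1 H2 cS.
set L := take (n - 4) (enum (S :\ s)).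
have cL : #|S :\ s| = #|S| - 1 by rewrite (cardsD1 s S) sS; clear; lia.
have sL : size L = n - 4 by rewrite size_takel // -cardE cL; clear -cS n5; lia.
have mL x : x \in L -> (x \in S) && (x != s).
  by move/mem_take; rewrite mem_enum !inE => /andP[-> ->].
have uL : uniq L by rewrite take_uniq // enum_uniq.
clearbody L.
pose sq := y :: ((L ++ [:: s]) ++ [:: c1; c2]).
have hS x : x \in L ++ [:: s] -> x \in S.
  by rewrite mem_cat !inE => /orP[/mL/andP[]//|/eqP->].
apply: (@contains_of_seq N n H _ sq y Hs).
- have nL x : x \notin S -> x \notin L by apply: contra => /mL/andP[].
  have ne a b : a \in S -> b \notin S -> (a == b) = false /\ (b == a) = false.
    by move=> aS bS; split; apply/eqP=> e; [rewrite -e aS in bS | rewrite e aS in bS].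
  have sL' : s \notin L by apply/negP=> /mL/andP[_]; rewrite eqxx.
  rewrite /sq cons_uniq cat_uniq cat_uniq uL /= !inE !mem_cat !inE.
  rewrite (negbTE (nL _ yS)) (negbTE (nL _ c1S)) (negbTE (nL _ c2S)) (negbTE sL').
  rewrite (ne _ _ sS yS).2 (ne _ _ sS c1S).2 (ne _ _ sS c2S).2 c12 /=.
  by rewrite (eq_sym y c1) (negbTE c1y) (eq_sym y c2) (negbTE c2y).
- by rewrite /sq /= size_cat size_cat sL /=; clear -n5; lia.
move=> u v un vn /orP[/orP[/and3P[/eqP -> v0 vn3]|/andP[/eqP -> /eqP ->]]|/andP[/eqP -> /eqP ->]].
- rewrite /sq /=; apply: HyS; apply: hS.
  have -> : v = v.-1.+1 by clear -v0; lia.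
  rewrite /= nth_cat size_cat sL /= ifT; last by clear -v0 vn3 n5; lia.
  apply: mem_nth; rewrite size_cat sL /=; clear -v0 vn3 n5; lia.
- have e1 : n - 3 = (size L).+1 by rewrite sL; clear -n5; lia.
  have e2 : n - 2 = (size L).+2 by rewrite sL; clear -n5; lia.
  rewrite e1 e2 /sq /= !nth_cat size_cat /=.
  have -> : size L < size L + 1 = true by clear; lia.
  have -> : (size L).+1 < size L + 1 = false by clear; lia.
  rewrite ltnn subnn.
  by have -> : (size L).+1 - (size L + 1) = 0 by clear; lia.
- have e1 : n - 3 = (size L).+1 by rewrite sL; clear -n5; lia.
  have e2 : n - 1 = (size L).+3 by rewrite sL; clear -n5; lia.
  rewrite e1 e2 /sq /= !nth_cat size_cat /=.
  have -> : size L < size L + 1 = true by clear; lia.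
  have -> : (size L).+2 < size L + 1 = false by clear; lia.
  rewrite ltnn subnn.
  by have -> : (size L).+2 - (size L + 1) = 1 by clear; lia.
Qed.


Lemma sub_size (T : finType) (A : {set T}) k : k <= #|A| ->
  exists X : {set T}, X \subset A /\ #|X| = k.
Proof.
move=> kA; exists [set x in take k (enum A)]; split.
- by apply/subsetP=> x; rewrite inE => /mem_take; rewrite mem_enum.
- rewrite cardsE; move/card_uniqP: (take_uniq k (enum_uniq (mem A))) ->.
  by rewrite size_takel // -cardE.
Qed.

Lemma two_of (T : finType) (A : {set T}) : 1 < #|A| ->
  exists x y, [/\ x \in A, y \in A & x != y].
Proof. by move/card_gt1P. Qed.

Lemma three_of (T : finType) (A : {set T}) : 2 < #|A| ->
  exists x y z, [/\ x \in A, y \in A, z \in A & [/\ x != y, x != z & y != z]].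
Proof.
case: (boolP (0 < #|A|)) => [/card_gt0P [x xA]|]; last by case: #|A|.
rewrite (cardsD1 x A) xA add1n ltnS => /two_of [y [z [yA zA yz]]].
move: yA zA; rewrite !inE => /andP[yx yA] /andP[zx zA].
exists x, y, z; split => //; split => //; by rewrite eq_sym.
Qed.

Definition compl_sym N (H : rel 'I_N) : symmetric H -> symmetric (compl H).
Proof. by move=> Hs x y; rewrite /compl Hs eq_sym. Qed.

Definition Nb N (G : rel 'I_N) (x : 'I_N) : {set 'I_N} := [set z | G x z].

Lemma fin2 N n (G : rel 'I_N) y (S C : {set 'I_N}) s :
  symmetric G -> 5 <= n -> y \notin S -> (forall x, x \in S -> G y x) -> n - 3 <= #|S| ->
  s \in S -> (forall c, c \in C -> (c \notin S) && (c != y)) -> 1 < #|C :&: Nb G s| ->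
  contains G (@T2 n).
Proof.
move=> Gs n5 yS Gy cS sS hC /two_of [c1 [c2 []]]; rewrite !inE.
move=> /andP[/hC/andP[c1S c1y] g1] /andP[/hC/andP[c2S c2y] g2] c12.
exact: (emb2 Gs n5 yS sS c1S c2S c1y c2y c12 Gy g1 g2 cS).
Qed.

Lemma fin1 N n (G : rel 'I_N) y (S C : {set 'I_N}) s1 s2 :
  symmetric G -> 5 <= n -> y \notin S -> (forall x, x \in S -> G y x) -> n - 3 <= #|S| ->
  s1 \in S -> s2 \in S -> s1 != s2 -> (forall c, c \in C -> (c \notin S) && (c != y)) ->
  0 < #|C :&: Nb G s1| -> 1 < #|C :&: Nb G s2| ->
  contains G (@T1 n).
Proof.
move=> Gs n5 yS Gy cS s1S s2S s12 hC.
move=> /card_gt0P [c1 hc1]. move: hc1. rewrite !inE. move=> /andP[c1C g1].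
rewrite (cardsD1 c1) => h.
have : 0 < #|C :&: Nb G s2 :\ c1| by move: h; case: (c1 \in _); clear; lia.
move=> /card_gt0P [c2]; rewrite !inE => /and3P[c21 c2C g2].
move/hC: c1C => /andP[c1S c1y]; move/hC: c2C => /andP[c2S c2y].
rewrite eq_sym in c21.
exact: (emb1 Gs n5 yS s1S s2S s12 c1S c2S c1y c2y c21 Gy g1 g2 cS).
Qed.

Section MainSec.
Variables (N n : nat) (H : rel 'I_N).
Hypotheses (Hs : symmetric H) (Hi : irreflexive H) (n12 : 12 <= n) (hN : 2 * n - 7 <= N).

Definition P1 (X Y : {set 'I_N}) := forall a1 a2 c1 c2, a1 \in X -> a2 \in X -> a1 != a2 ->
  c1 \in Y -> c2 \in Y -> c1 != c2 -> H a1 c1 -> H a2 c2 -> False.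
Definition P2 (X Y : {set 'I_N}) := forall a c1 c2, a \in X ->
  c1 \in Y -> c2 \in Y -> c1 != c2 -> H a c1 -> H a c2 -> False.
Definition Pi (i : nat) X Y := if i == 1 then P1 X Y else P2 X Y.

Lemma Pi_of i v (X Y : {set 'I_N}) : (i == 1) || (i == 2) -> ~ contains H (@T i n) ->
  X \subset Nb H v -> n - 3 <= #|X| -> (forall c, c \in Y -> (c \notin X) && (c != v)) ->
  Pi i X Y.
Proof.
move=> hi nC /subsetP XN cX hY.
have vX : v \notin X by apply/negP => /XN; rewrite inE Hi.
have HvX x : x \in X -> H v x by move/XN; rewrite inE.
have n5 : 5 <= n by clear -n12; lia.
rewrite /Pi; case: (i =P 1) hi nC => [-> _|ne]; rewrite /T.
- move=> nC a1 a2 c1 c2 a1X a2X a12 c1Y c2Y c12 h1 h2; apply: nC => /=.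
  move/hY: c1Y => /andP[c1X c1v]; move/hY: c2Y => /andP[c2X c2v].
  exact: (emb1 Hs n5 vX a1X a2X a12 c1X c2X c1v c2v c12 HvX h1 h2 cX).
- move=> /orP[/eqP//|/eqP ->] /= nC a c1 c2 aX c1Y c2Y c12 h1 h2; apply: nC.
  move/hY: c1Y => /andP[c1X c1v]; move/hY: c2Y => /andP[c2X c2v].
  exact: (emb2 Hs n5 vX aX c1X c2X c1v c2v c12 HvX h1 h2 cX).
Qed.

Lemma Pi_mono i (X Y Y' : {set 'I_N}) : Y' \subset Y -> Pi i X Y -> Pi i X Y'.
Proof.
move=> /subsetP sY; rewrite /Pi; case: (i == 1) => P.
- by move=> a1 a2 c1 c2 a1X a2X a12 c1Y c2Y; apply: P => //; apply: sY.
- by move=> a c1 c2 aX c1Y c2Y; apply: P => //; apply: sY.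
Qed.

Lemma key i (X Y : {set 'I_N}) u1 u2 : Pi i X Y -> u1 \in X -> u2 \in X -> u1 != u2 ->
  1 < #|Y :&: Nb H u1| -> #|Y :&: Nb H u2| = 0.
Proof.
move=> P u1X u2X u12 /two_of [c [c' []]]; rewrite !inE => /andP[cY hc] /andP[c'Y hc'] cc'.
move: P; rewrite /Pi; case: (i == 1) => P; last first.
  by exfalso; apply: (P u1 c c').
apply/eqP; rewrite cards_eq0; apply/eqP/setP => c2; rewrite !inE.
apply/negP => /andP[c2Y h2].
case: (c =P c2) => [e|ne].
- apply: (P u1 u2 c' c2) => //; by rewrite -e eq_sym.
- by apply: (P u1 u2 c c2) => //; apply/eqP.
Qed.

Lemma P1_swap (X Y : {set 'I_N}) : P1 X Y -> P1 Y X.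
Proof.
move=> P b1 b2 a1 a2 b1Y b2Y b12 a1X a2X a12 h1 h2.
by apply: (P a1 a2 b1 b2) => //; rewrite Hs.
Qed.

Lemma card_sum (X : {set 'I_N}) y : #|X :&: Nb H y| = \sum_(a in X) (H y a : nat).
Proof.
rewrite -sum1_card [LHS]big_mkcond [RHS]big_mkcond /=; apply: eq_bigr => a _.
by rewrite !inE; case: (a \in X); case: (H y a).
Qed.

Lemma find_y i (X Y : {set 'I_N}) : (i == 1) || (i == 2) -> Pi i X Y -> 1 < #|Y| ->
  #|X| < 2 * #|Y| -> exists2 y, y \in Y & #|X :&: Nb H y| <= 1.
Proof.
move=> hi; rewrite /Pi; case: (i =P 1) => [_|ne] P Y1 XY.
- case/two_of: Y1 => y1 [y2 [y1Y y2Y y12]].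
  case: (leqP #|X :&: Nb H y1| 1) => h1; first by exists y1.
  exists y2 => //.
  have := @key 1 Y X y1 y2; rewrite /Pi eqxx => k.
  by rewrite (k (P1_swap P) y1Y y2Y y12 h1).
- apply: NNPP => nE.
  have all2 y : y \in Y -> 2 <= #|X :&: Nb H y|.
    move=> yY; case: (leqP 2 #|X :&: Nb H y|) => // h; exfalso; apply: nE.
    by exists y.
  have le1 a : a \in X -> #|Y :&: Nb H a| <= 1.
    move=> aX; case: (leqP #|Y :&: Nb H a| 1) => // /two_of [c [c' []]].
    rewrite !inE => /andP[cY hc] /andP[c'Y hc'] cc'; exfalso; exact: (P a c c').
  have : 2 * #|Y| <= \sum_(y in Y) #|X :&: Nb H y|.
    rewrite -sum1_card big_distrr /=; apply: leq_sum => y yY; rewrite muln1; exact: all2.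
  have : \sum_(y in Y) #|X :&: Nb H y| <= #|X|.
    under eq_bigr => y _ do rewrite card_sum.
    rewrite exchange_big /= -sum1_card; apply: leq_sum => a aX.
    rewrite (eq_bigr (fun y => (H a y : nat))); last by move=> y _; rewrite Hs.
    by rewrite -card_sum; apply: le1.
  move: XY; clear; lia.
Qed.

Lemma compl_card (C : {set 'I_N}) w : (forall c, c \in C -> c != w) ->
  #|C :&: Nb (compl H) w| + #|C :&: Nb H w| = #|C|.
Proof.
move=> hC; rewrite -(cardsID (Nb H w) C) addnC; congr (_ + _); apply: eq_card => c.
rewrite !inE /compl; case cC: (c \in C) => //=.
  by rewrite eq_sym (hC c cC) andbT.
by rewrite andbF.
Qed.

Lemma mainH i v : (i == 1) || (i == 2) -> n - 3 <= #|Nb H v| ->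
  contains H (@T i n) \/ (contains (compl H) (@T1 n) /\ contains (compl H) (@T2 n)).
Proof.
move=> hi dv; case: (classic (contains H (@T i n))) => [c|nC]; [by left | right].
have n5 : 5 <= n by clear -n12; lia.
have Cs := compl_sym Hs.
have vNb : v \notin Nb H v by rewrite inE Hi.
case: (leqP (n - 2) #|Nb H v|) => dv2.
- case: (sub_size dv2) => X [XN cX].
  set Y := ~: (v |: X).
  have hY c : c \in Y -> (c \notin X) && (c != v).
    by rewrite !inE negb_or => /andP[a b]; rewrite a b.
  have vX : v \notin X by apply: contra vNb; apply: (subsetP XN).
  have cY : #|Y| + (n - 1) = N.
    have := cardsC (v |: X); rewrite card_ord cardsU1 vX cX -/Y => e.
    by clear -e n12; lia.
  have P := Pi_of hi nC XN (leq_trans (leq_sub2l n (isT : 2 <= 3)) (eq_leq (esym cX))) hY.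
  have [y yY my] : exists2 y, y \in Y & #|X :&: Nb H y| <= 1.
    have h6 : n - 6 <= #|Y| by clear -cY n12 hN; lia.
    apply: (find_y hi P); first by apply: (leq_trans _ h6); clear -n12; lia.
    rewrite cX; apply: (@leq_trans (2 * (n - 6))); first by clear -n12; lia.
    by rewrite leq_mul2l h6 orbT.
  have [yX yv] := andP (hY y yY).
  set S := X :\: Nb H y.
  have cS : n - 3 <= #|S|.
    have := cardsID (Nb H y) X; rewrite cX -/S => e; clear -e my n12; lia.
  set C := Y :\ y.
  have cC : #|C| + 1 = #|Y| by rewrite (cardsD1 y Y) yY addnC.
  have PC := Pi_mono (subD1set Y y) P.
  have SX : S \subset X by apply: subsetDl.
  have [w1 [w2 [w1S w2S w12 m1 m2]]] : exists w1 w2, [/\ w1 \in S, w2 \in S, w1 != w2,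
      #|C :&: Nb H w1| <= 1 & #|C :&: Nb H w2| <= 1].
    have : 2 < #|S| by clear -cS n12; lia.
    case/three_of => u1 [u2 [u3 [u1S u2S u3S [u12 u13 u23]]]].
    have uX u : u \in S -> u \in X by apply: (subsetP SX).
    case: (leqP #|C :&: Nb H u1| 1) => h1.
    + case: (leqP #|C :&: Nb H u2| 1) => h2; first by exists u1, u2.
      exists u1, u3; split => //.
      by rewrite (key PC (uX _ u2S) (uX _ u3S) u23 h2).
    + exists u2, u3; split => //.
      * by rewrite (key PC (uX _ u1S) (uX _ u2S) u12 h1).
      * by rewrite (key PC (uX _ u1S) (uX _ u3S) u13 h1).
  have yS : y \notin S by apply: contra yX; apply: (subsetP SX).
  have Gy x : x \in S -> compl H y x.
    rewrite !inE /compl => /andP[nx xX]; rewrite nx andbT.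
    by apply: contraNneq yX => ->.
  have hC c : c \in C -> (c \notin S) && (c != y).
    rewrite in_setD1 => /andP[cy cYY]; rewrite cy andbT.
    have := hY c cYY; case/andP => cX' _.
    by apply: contra cX'; apply: (subsetP SX).
  have cw w : w \in S -> #|C :&: Nb H w| <= 1 -> #|C| <= #|C :&: Nb (compl H) w| + 1.
    move=> wS mw.
    have e : #|C :&: Nb (compl H) w| + #|C :&: Nb H w| = #|C|.
      apply: compl_card => c /hC /andP[cnS _]; by apply: contraNneq cnS => ->.
    by clear -e mw; lia.
  have c1 := cw _ w1S m1; have c2 := cw _ w2S m2.
  have cC5 : 5 <= #|C| by clear -cC cY n12 hN; lia.
  have g1 : 1 < #|C :&: Nb (compl H) w1| by clear -c1 cC5; lia.
  have g2 : 1 < #|C :&: Nb (compl H) w2| by clear -c2 cC5; lia.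
  split.
  + exact: (fin1 Cs n5 yS Gy cS w1S w2S w12 hC (ltnW g1) g2).
  + exact: (fin2 Cs n5 yS Gy cS w1S hC g1).
- set X := Nb H v.
  have cX : #|X| = n - 3.
    apply/anti_leq; rewrite dv andbT -ltnS; apply: (leq_trans dv2); clear -n12; lia.
  set Y := ~: (v |: X).
  have hY c : c \in Y -> (c \notin X) && (c != v).
    by rewrite !inE negb_or => /andP[a b]; rewrite a b.
  have cY : #|Y| + (n - 2) = N.
    have := cardsC (v |: X); rewrite card_ord cardsU1 vNb cX -/Y => e.
    by clear -e n12; lia.
  have P := Pi_of hi nC (subxx X) dv hY.
  have [y yY my] : exists2 y, y \in Y & #|X :&: Nb H y| <= 1.
    have h6 : n - 5 <= #|Y| by clear -cY n12 hN; lia.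
    apply: (find_y hi P); first by apply: (leq_trans _ h6); clear -n12; lia.
    rewrite cX; apply: (@leq_trans (2 * (n - 5))); first by clear -n12; lia.
    by rewrite leq_mul2l h6 orbT.
  have [yX yv] := andP (hY y yY).
  set S0 := X :\: Nb H y.
  have cS0 : n - 4 <= #|S0|.
    have := cardsID (Nb H y) X; rewrite cX -/S0 => e; clear -e my n12; lia.
  set S := v |: S0.
  have S0X : S0 \subset X by apply: subsetDl.
  have vS0 : v \notin S0 by apply: contra vNb; apply: (subsetP S0X).
  have cS : n - 3 <= #|S|.
    rewrite /S cardsU1 vS0 add1n; apply: (@leq_trans (n - 4).+1); [clear -n12; lia | by rewrite ltnS].
  set C := Y :\ y.
  have cC : #|C| + 1 = #|Y| by rewrite (cardsD1 y Y) yY addnC.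
  have PC := Pi_mono (subD1set Y y) P.
  have [w [wS0 mw]] : exists w, w \in S0 /\ #|C :&: Nb H w| <= 1.
    have : 1 < #|S0| by clear -cS0 n12; lia.
    case/two_of => u1 [u2 [u1S u2S u12]].
    have uX u : u \in S0 -> u \in X by apply: (subsetP S0X).
    case: (leqP #|C :&: Nb H u1| 1) => h1; first by exists u1.
    by exists u2; rewrite (key PC (uX _ u1S) (uX _ u2S) u12 h1).
  have yS : y \notin S.
    rewrite in_setU1 negb_or yv /=; apply: contra yX; apply: (subsetP S0X).
  have Gy x : x \in S -> compl H y x.
    rewrite in_setU1 => /orP[/eqP ->|].
      by rewrite /compl yv /= Hs; move: yX; rewrite /X inE.
    rewrite !inE /compl => /andP[nx xX]; rewrite nx andbT.
    by apply/eqP => e; move: yX; rewrite /X inE e xX.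
  have hC c : c \in C -> (c \notin S) && (c != y).
    rewrite in_setD1 => /andP[cy cYY]; rewrite cy andbT.
    have := hY c cYY; case/andP => cX' cv.
    rewrite in_setU1 negb_or cv /=.
    by apply: contra cX'; apply: (subsetP S0X).
  have wv : w != v by apply: contraNneq vS0 => <-.
  have wS : w \in S by rewrite in_setU1 wS0 orbT.
  have vS : v \in S by rewrite in_setU1 eqxx.
  have cw : #|C| <= #|C :&: Nb (compl H) w| + 1.
    have e : #|C :&: Nb (compl H) w| + #|C :&: Nb H w| = #|C|.
      apply: compl_card => c /hC /andP[cnS _]; by apply: contraNneq cnS => ->.
    by clear -e mw; lia.
  have cv : #|C :&: Nb (compl H) v| = #|C|.
    suff -> : C :&: Nb (compl H) v = C by [].
    apply/setIidPl/subsetP => c; rewrite in_setD1 => /andP[_ cYY].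
    have := hY c cYY; case/andP; rewrite /X inE => nv cv.
    by rewrite inE /compl eq_sym cv nv.
  have cC5 : 5 <= #|C| by clear -cC cY n12 hN; lia.
  have g1 : 1 < #|C :&: Nb (compl H) w| by clear -cw cC5; lia.
  have g2 : 1 < #|C :&: Nb (compl H) v| by rewrite cv; clear -cC5; lia.
  split.
  + exact: (fin1 Cs n5 yS Gy cS wS vS wv hC (ltnW g1) g2).
  + exact: (fin2 Cs n5 yS Gy cS vS hC g2).
Qed.

End MainSec.


Lemma card_le_inj (T : finType) (A : {set T}) (phi : T -> nat) m :
  {in A &, injective phi} -> (forall x, x \in A -> phi x < m) -> #|A| <= m.
Proof.
move=> inj lt; rewrite cardE -(size_map phi) -(size_iota 0 m); apply: uniq_leq_size.
- rewrite map_inj_in_uniq ?enum_uniq // => x y; rewrite !mem_enum; exact: inj.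
- move=> z /mapP [x]; rewrite mem_enum => xA ->; rewrite mem_iota /= add0n; exact: lt.
Qed.

Definition cd (M x y : nat) := if x <= y then y - x else y + M - x.
Definition circ (M k N : nat) : rel 'I_N := fun x y =>
  (0 < cd M (nat_of_ord x) (nat_of_ord y)) && ((cd M (nat_of_ord x) (nat_of_ord y) <= k) || (M - k <= cd M (nat_of_ord x) (nat_of_ord y))).

Section Circ.
Variables (M k N : nat) (NM : N <= M) (kM : 2 * k < M).

Lemma circ_sym : symmetric (@circ M k N).
Proof.
move=> x y; rewrite /circ /cd.
move: (nat_of_ord x) (nat_of_ord y) (ltn_ord x) (ltn_ord y) => a b ha hb.
case: (leqP a b) => h1; case: (leqP b a) => h2.
all: apply/idP/idP => /andP[h3 /orP[h4|h4]]; apply/andP; split; try apply/orP; lia.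
Qed.

Definition ph (z : nat) := if z <= k then z - 1 else k + (M - z) - 1.

Lemma ph_inj z1 z2 : 0 < z1 < M -> 0 < z2 < M -> (z1 <= k) || (M - k <= z1) ->
  (z2 <= k) || (M - k <= z2) -> ph z1 = ph z2 -> z1 = z2.
Proof.
rewrite /ph => /andP[a1 b1] /andP[a2 b2] /orP[c1|c1] /orP[c2|c2].
all: case: (leqP z1 k) => d1; case: (leqP z2 k) => d2; lia.
Qed.

Lemma ph_lt z : 0 < z < M -> (z <= k) || (M - k <= z) -> ph z < 2 * k.
Proof. rewrite /ph => /andP[a1 b1] /orP[c1|c1]; case: (leqP z k) => d1; lia. Qed.

Lemma cd_lt a b : a < M -> b < M -> cd M a b < M.
Proof. rewrite /cd => ha hb; case: (leqP a b); lia. Qed.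

Lemma cd_inj a b c : a < M -> b < M -> c < M -> cd M a b = cd M a c -> b = c.
Proof. rewrite /cd => ha hb hc; case: (leqP a b); case: (leqP a c); lia. Qed.

Lemma cd_pos a b : a < M -> b < M -> a != b -> 0 < cd M a b.
Proof. rewrite /cd => ha hb /eqP; case: (leqP a b); lia. Qed.

Lemma circ_deg x : #|Nb (@circ M k N) x| <= 2 * k.
Proof.
have hM (y : 'I_N) : y < M by apply: leq_trans (ltn_ord y) NM.
apply: (@card_le_inj _ _ (fun y : 'I_N => ph (cd M x y))).
- move=> y1 y2; rewrite !inE /circ /= => /andP[p1 q1] /andP[p2 q2] e; apply: ord_inj.
  apply: (cd_inj (hM x) (hM y1) (hM y2)); apply: ph_inj => //.
  + by rewrite p1 cd_lt.
  + by rewrite p2 cd_lt.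
- move=> y; rewrite !inE /circ /= => /andP[p1 q1]; apply: ph_lt => //.
  by rewrite p1 cd_lt.
Qed.

Lemma circ_cdeg x : #|Nb (compl (@circ M k N)) x| <= M - 2 * k - 1.
Proof.
have hM (y : 'I_N) : y < M by apply: leq_trans (ltn_ord y) NM.
apply: (@card_le_inj _ _ (fun y : 'I_N => cd M x y - k - 1)).
- move=> y1 y2; rewrite !inE /compl /circ /= => /andP[n1 h1] /andP[n2 h2] e; apply: ord_inj.
  apply: (cd_inj (hM x) (hM y1) (hM y2)).
  have := cd_pos (hM x) (hM y1) n1; have := cd_pos (hM x) (hM y2) n2.
  have := cd_lt (hM x) (hM y1); have := cd_lt (hM x) (hM y2).
  move: h1 h2 e; rewrite !negb_and !negb_or -!ltnNge.
  move: (cd M x y1) (cd M x y2) => z1 z2.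
  move=> /orP[q1|/andP[q1 r1]] /orP[q2|/andP[q2 r2]]; lia.
- move=> y; rewrite !inE /compl /circ /= => /andP[n1 h1].
  have := cd_pos (hM x) (hM y) n1; have := cd_lt (hM x) (hM y).
  move: h1; rewrite !negb_and !negb_or -!ltnNge.
  move: (cd M x y) => z.
  move=> /orP[q1|/andP[q1 r1]]; lia.
Qed.
End Circ.


Lemma no_contain N n kk (G : rel 'I_N) : 5 <= n -> (kk == 1) || (kk == 2) ->
  (forall x, #|Nb G x| <= n - 4) -> ~ contains G (@T kk n).
Proof.
move=> n5 hk hd [f [finj fE]].
have n0 : 0 < n by clear -n5; lia.
pose o := Ordinal n0.
have gS (j : 'I_(n - 3)) : j.+1 < n by have := ltn_ord j; clear -n5; lia.
pose g j := Ordinal (gS j).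
have adj j : @T kk n o (g j).
  have := ltn_ord j => hj.
  by rewrite /T; case: (kk == 1); rewrite /T1 /T2 /symc /= hj.
have ginj : injective (fun j => f (g j)).
  by move=> j1 j2 /finj /(congr1 val) /= [] /ord_inj.
have sub : (fun j => f (g j)) @: [set: 'I_(n - 3)] \subset Nb G (f o).
  by apply/subsetP => z /imsetP [j _ ->]; rewrite inE; apply: fE.
have := subset_leq_card sub; rewrite card_imset // cardsT card_ord => h.
have := leq_trans h (hd (f o)); clear -n5; lia.
Qed.

Lemma deg_split N (G : rel 'I_N) : irreflexive G ->
  forall x, #|Nb G x| + #|Nb (compl G) x| = N - 1.
Proof.
move=> Gi x.
have := cardsID (Nb G x) [set~ x]; rewrite cardsC1 card_ord subn1 => <-.
congr (_ + _); apply: eq_card => y; rewrite !inE /compl.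
- by case: (y =P x) => [->|]; rewrite ?Gi //= andbT.
- by rewrite eq_sym andbC.
Qed.

Lemma sum_even N (G : rel 'I_N) : symmetric G -> irreflexive G ->
  ~~ odd (\sum_(x : 'I_N) #|Nb G x|).
Proof.
move=> Gs Gi.
have e x : #|Nb G x| = \sum_(y : 'I_N) ((x < y) && G x y : nat) + \sum_(y : 'I_N) ((y < x) && G x y : nat).
  rewrite -big_split /= -sum1_card big_mkcond /=; apply: eq_bigr => y _; rewrite inE.
  case: (ltngtP x y) => h //=; first by case: (G x y).
  have yx : y = x by apply: ord_inj; rewrite h.
  by rewrite yx Gi.
have ex : \sum_(x : 'I_N) \sum_(y : 'I_N) ((y < x) && G x y : nat) =
          \sum_(x : 'I_N) \sum_(y : 'I_N) ((x < y) && G x y : nat).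
  rewrite exchange_big; apply: eq_bigr => y _; apply: eq_bigr => x _; by rewrite Gs.
rewrite (eq_bigr _ (fun x _ => e x)) big_split /= ex.
by rewrite addnn odd_double.
Qed.

Lemma compl_irr N (G : rel 'I_N) : irreflexive (compl G).
Proof. by move=> x; rewrite /compl eqxx. Qed.

Lemma contains_mono N k (G1 G2 : rel 'I_N) (K : rel 'I_k) :
  contains G1 K -> (forall x y, G1 x y -> G2 x y) -> contains G2 K.
Proof. by move=> [f [fi fe]] h; exists f; split => // u v /fe /h. Qed.

Lemma half_split n : exists m, n = 2 * m + odd n.
Proof. exists n./2; have := odd_double_half n; rewrite -muln2; lia. Qed.

Lemma high_even N n (G : rel 'I_N) : irreflexive G -> N = 2 * n - 6 -> 12 <= n ->
  exists v, (n - 3 <= #|Nb G v|) || (n - 3 <= #|Nb (compl G) v|).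
Proof.
move=> Gi eN n12.
have N0 : 0 < N by rewrite eN; clear -n12; lia.
exists (Ordinal N0); have := deg_split Gi (Ordinal N0).
move: (#|Nb G _|) (#|Nb (compl G) _|) => a b e.
case: (leqP (n - 3) a) => //= h; rewrite eN in e; clear -e h n12; lia.
Qed.

Lemma high_odd N n (G : rel 'I_N) : symmetric G -> irreflexive G -> N = 2 * n - 7 ->
  odd n -> 12 <= n ->
  exists v, (n - 3 <= #|Nb G v|) || (n - 3 <= #|Nb (compl G) v|).
Proof.
move=> Gs Gi eN on n12; apply: NNPP => nE.
have d x : #|Nb G x| = n - 4.
  have := deg_split Gi x.
  have : ~~ ((n - 3 <= #|Nb G x|) || (n - 3 <= #|Nb (compl G) x|)).
    by apply/negP => h; apply: nE; exists x.
  move: (#|Nb G x|) (#|Nb (compl G) x|) => a b; rewrite negb_or -!ltnNge eN => /andP[h1 h2] e.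
  clear -h1 h2 e n12; lia.
have := sum_even Gs Gi; rewrite (eq_bigr (fun _ => n - 4)); last by move=> x _; rewrite d.
rewrite sum_nat_const card_ord oddM.
have [m hm] := half_split n; rewrite on in hm.
have e1 : N = 2 * (n - 4) + 1 by rewrite eN; clear -n12; lia.
have e2 : n - 4 = 2 * (m - 2) + 1 by clear -hm n12; lia.
have o x : odd (2 * x + 1) by rewrite addn1 /= mul2n odd_double.
by rewrite e1 e2 !o.
Qed.

Lemma inT i : i \in [:: 1; 2] -> (i == 1) || (i == 2).
Proof. by rewrite !inE. Qed.

Lemma T12 (j n : nat) N (G : rel 'I_N) : j \in [:: 1; 2] ->
  contains G (@T1 n) -> contains G (@T2 n) -> contains G (@T j n).
Proof. by rewrite !inE /T => /orP[/eqP ->|/eqP ->]. Qed.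

Lemma upper N n i j : i \in [:: 1; 2] -> j \in [:: 1; 2] -> 12 <= n -> 2 * n - 7 <= N ->
  (forall G : rel 'I_N, simple_graph G ->
     exists v, (n - 3 <= #|Nb G v|) || (n - 3 <= #|Nb (compl G) v|)) ->
  ramsey_prop (@T i n) (@T j n) N.
Proof.
move=> hi hj n12 hN hd G [Gs Gi].
have [v /orP[h|h]] := hd G (conj Gs Gi).
- case: (mainH Gs Gi n12 hN (inT hi) h) => [c|[c1 c2]]; first by left.
  by right; apply: T12.
- case: (mainH (compl_sym Gs) (@compl_irr _ G) n12 hN (inT hj) h) => [c|[c1 c2]]; first by right.
  left; apply: (contains_mono (G1 := compl (compl G))); first by apply: T12.
  move=> x y; rewrite /compl => /andP[nxy]; rewrite negb_and !negbK => /orP[/eqP e|] //.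
  by rewrite e eqxx in nxy.
Qed.

Lemma lower N n i j M k : i \in [:: 1; 2] -> j \in [:: 1; 2] -> 12 <= n ->
  N <= M -> 2 * k < M -> 2 * k <= n - 4 -> M - 2 * k - 1 <= n - 4 ->
  ~ ramsey_prop (@T i n) (@T j n) N.
Proof.
move=> hi hj n12 NM kM k1 k2 R.
have Gs := circ_sym NM kM.
have Gi : irreflexive (@circ M k N) by move=> x; rewrite /circ /cd leqnn subnn.
have n5 : 5 <= n by clear -n12; lia.
case: (R _ (conj Gs Gi)) => c.
- apply: (no_contain n5 (inT hi) _ c) => x.
  exact: leq_trans (circ_deg NM kM x) k1.
- apply: (no_contain n5 (inT hj) _ c) => x.
  exact: leq_trans (circ_cdeg NM kM x) k2.
Qed.

Theorem theorem4p1 (n i j : nat) (hi : i \in [:: 1; 2]) (hj : j \in [:: 1; 2]) :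
  (odd n -> 17 <= n -> is_ramsey_number (@T i n) (@T j n) (2 * n - 7)) /\
  (~~ odd n -> 12 <= n -> is_ramsey_number (@T i n) (@T j n) (2 * n - 6)).
Proof.
have [m hm] := half_split n.
split.
- move=> on n17; rewrite on in hm.
  have n12 : 12 <= n by clear -n17; lia.
  split; first by clear -n17; lia.
  split.
  + apply: upper => //; last first.
    move=> G [Gs Gi]; exact: high_odd Gs Gi erefl on n12.
  + move=> N N0 Nr.
    apply: (@lower N n i j (2 * n - 8) (m - 2)) => //; clear -hm Nr n17; lia.
- move=> en n12; rewrite (negbTE en) in hm.
  split; first by clear -n12; lia.
  split.
  + apply: upper => //; first by clear; lia.
    move=> G [Gs Gi]; exact: high_even Gi erefl n12.
  + move=> N N0 Nr.
    apply: (@lower N n i j (2 * n - 7) (m - 2)) => //; clear -hm Nr n12; lia.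
Qed.
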